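(* Let $\mathcal{C}$ be an $(n,k)$ binary linear code with $n\ge2$, $k\ge1$, generator matrix $\mathbf{G}$ (any representation), information functions $\tilde e_g$, coefficients $a_t$, check-node EXIT function $I_E(p)$ and quantity $\Delta_{n-2}$ as defined in the context. Then: (i) $\frac{\mathrm{d}I_E}{\mathrm{d}p}\big|_{p=0}=\frac{(n-1)a_0-a_1}{n}$; (ii) $a_0=0$ if and only if $d_{\min}(\mathcal{C})\ge2$; (iii) if $d_{\min}(\mathcal{C})\ge 2$, then $a_1=2\Delta_{n-2}$ and hence $\frac{\mathrm{d}I_E}{\mathrm{d}p}\big|_{p=0}=-\frac{2}{n}\Delta_{n-2}$; moreover $a_1=\Delta_{n-2}=0$ if $d_{\min}(\mathcal{C})\ge3$, while $\Delta_{n-2}>0$ (so $a_1\neq0$) if $d_{\min}(\mathcal{C})=2$.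
   Context: For a $k\times n$ generator matrix $\mathbf{G}$ (rank $k$) of a binary $(n,k)$ code and $g\in\{0,\dots,n\}$, the un-normalized information function is $\tilde e_g=\sum_{S}\operatorname{rank}(\mathbf{G}_S)$, the sum over all $g$-element sets $S$ of column indices, $\mathbf{G}_S$ the $k\times g$ submatrix of those columns (rank of empty matrix is $0$). Set $a_t=(n-t)\tilde e_{n-t}-(t+1)\tilde e_{n-t-1}$ for $t=0,\dots,n-1$, and define the check-node EXIT function on the binary erasure channel $I_E(p)=1-\frac1n\sum_{t=0}^{n-1}a_t\,p^t(1-p)^{n-t-1}$, $p\in[0,1]$. Define $\Delta_{n-2}=\sum_{S}\big(k-\operatorname{rank}(\mathbf{G}_S)\big)$, the sum over all $(n-2)$-element sets $S$ of column indices. $d_{\min}$ denotes minimum Hamming distance. *)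

(* Defs.v *)
From HB Require Import structures.
From mathcomp Require Import all_boot all_order all_algebra all_fingroup all_field.
Set Implicit Arguments. Unset Strict Implicit. Unset Printing Implicit Defensive.
Import Order.TTheory GRing.Theory Num.Theory.
Local Open Scope ring_scope.

Section Code.
Variables (k n : nat).
Implicit Types (G : 'M['F_2]_(k, n)).

(* G_S : the k x |S| submatrix of G formed by the columns indexed by S
   (in increasing order of index). *)
Definition colsubset G (S : {set 'I_n}) : 'M['F_2]_(k, #|S|) :=
  colsub (fun j : 'I_#|S| => enum_val j) G.

(* un-normalized information function ~e_g *)
Definition info_fun G (g : nat) : nat :=
  (\sum_(S : {set 'I_n} | #|S| == g) \rank (colsubset G S))%N.

Definition acoef G (t : nat) : int :=
  ((n - t) * info_fun G (n - t))%:Z - ((t + 1) * info_fun G (n - t - 1))%:Z.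

Definition IE (R : realFieldType) G : {poly R} :=
  1 - (n%:R)^-1 *: \sum_(t < n) ((acoef G t)%:~R *: ('X^t * (1 - 'X) ^+ (n - t - 1))).

Definition Delta G : nat :=
  (\sum_(S : {set 'I_n} | #|S| == (n - 2)%N) (k - \rank (colsubset G S)))%N.

Definition wt (c : 'rV['F_2]_n) : nat := #|[set j | c 0 j != 0]|.

(* minimum Hamming distance = minimum weight of a nonzero codeword u G *)
Definition dmin G : nat :=
  \big[minn/n]_(u : 'rV['F_2]_k | u *m G != 0) wt (u *m G).

End Code.

(* Main.v *)
Require Import Defs.
From HB Require Import structures.
From mathcomp Require Import all_boot all_order all_algebra all_fingroup all_field.
Import Order.TTheory GRing.Theory Num.Theory.
Local Open Scope ring_scope.
Set Implicit Arguments. Unset Strict Implicit.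

Section Pf.
Variables (k n : nat) (G : 'M['F_2]_(k, n)).
Hypothesis hrank : \rank G = k.

Definition supp (c : 'rV['F_2]_n) := [set j | c 0 j != 0].

Lemma rank_le (S : {set 'I_n}) : (\rank (colsubset G S) <= k)%N.
Proof. exact: rank_leq_row. Qed.

Lemma codeword_inj (u : 'rV['F_2]_k) : (u *m G == 0) = (u == 0).
Proof.
have hf : row_free G by rewrite /row_free hrank.
apply/eqP/eqP => [h|->]; last by rewrite mul0mx.
by apply: (row_free_inj hf); rewrite h mul0mx.
Qed.

Lemma def_pos (S : {set 'I_n}) :
  (0 < k - \rank (colsubset G S))%N <->
  exists u : 'rV['F_2]_k, u *m G != 0 /\ supp (u *m G) \subset ~: S.
Proof.
rewrite subn_gt0 ltn_neqAle rank_le andbT.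
have colE : forall u : 'rV['F_2]_k, (u *m colsubset G S == 0) = (supp (u *m G) \subset ~: S).
  move=> u; rewrite /colsubset mulmx_colsub.
  apply/eqP/subsetP => [h j|h].
    rewrite !inE => hj; apply: contraNN hj => jS.
    move/matrixP: h => /(_ 0 (enum_rank_in jS j)).
    by rewrite !mxE enum_rankK_in // => ->.
  apply/matrixP => i j; rewrite (ord1 i) [RHS]mxE mxE.
  have := h (enum_val j); rewrite !inE enum_valP /=.
  by move=> H; apply/eqP; apply/negPn/negP => /H.
split.
  move=> hne.
  have nf : ~~ row_free (colsubset G S) by rewrite /row_free.
  set v := nz_row (kermx (colsubset G S)).
  exists v; split.
    by rewrite codeword_inj nz_row_eq0 kermx_eq0.
  rewrite -colE; apply/eqP/sub_kermxP.
  exact: nz_row_sub.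
case=> u [hu hs]; apply/negP => /eqP hr.
have hf : row_free (colsubset G S) by rewrite /row_free hr.
move: hu; rewrite codeword_inj => /eqP; apply.
apply: (row_free_inj hf); rewrite mul0mx; apply/eqP; by rewrite colE.
Qed.


Definition Dsum (g : nat) : nat :=
  (\sum_(S : {set 'I_n} | #|S| == g) (k - \rank (colsubset G S)))%N.

Lemma info_D g : (info_fun G g + Dsum g = k * 'C(n, g))%N.
Proof.
rewrite /info_fun /Dsum -big_split /=.
rewrite (eq_bigr (fun _ => k)) => [|S _]; last by rewrite subnKC // rank_le.
rewrite (eq_bigl (fun S => S \in [set S : {set 'I_n} | #|S| == g])); last first.
  by move=> S; rewrite inE.
by rewrite sum_nat_const card_draws card_ord mulnC.
Qed.

Lemma wt_gt0 (c : 'rV['F_2]_n) : c != 0 -> (0 < wt c)%N.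
Proof.
move=> hc; rewrite lt0n; apply: contra hc; rewrite cards_eq0 => /eqP h.
apply/eqP/matrixP => i j; rewrite (ord1 i) mxE.
apply/eqP; have := in_set0 j; rewrite -h inE; exact: negbFE.
Qed.

Lemma wt_supp (c : 'rV['F_2]_n) : wt c = #|supp c|.
Proof. by []. Qed.

Lemma wt_le (c : 'rV['F_2]_n) : (wt c <= n)%N.
Proof. by rewrite /wt (leq_trans (max_card _)) ?card_ord. Qed.

Lemma D0 m : (m <= n)%N ->
  (forall u : 'rV['F_2]_k, u *m G != 0 -> (m < wt (u *m G))%N) -> Dsum (n - m) = 0%N.
Proof.
move=> hm hw; apply/eqP; rewrite sum_nat_eq0; apply/forall_inP => S /eqP hS.
apply/eqP; apply/eqP; rewrite eqn0Ngt; apply/negP => /def_pos [u [hu hs]].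
have := hw u hu; rewrite ltnNge; move/negP; apply.
rewrite wt_supp (leq_trans (subset_leq_card hs)) // cardsCs setCK card_ord hS.
by rewrite subKn.
Qed.

Lemma Dpos m (u : 'rV['F_2]_k) : u *m G != 0 -> wt (u *m G) = m -> (0 < Dsum (n - m))%N.
Proof.
move=> hu hw.
have hS : #|~: supp (u *m G)| == (n - m)%N by rewrite cardsCs setCK card_ord -wt_supp hw.
rewrite /Dsum (bigD1 (~: supp (u *m G))) //=.
have : (0 < k - \rank (colsubset G (~: supp (u *m G))))%N.
  by apply/def_pos; exists u; split; rewrite // setCK.
by move=> h; rewrite (leq_trans h) // leq_addr.
Qed.

Lemma dmin_le (u : 'rV['F_2]_k) : u *m G != 0 -> (dmin G <= wt (u *m G))%N.
Proof.
move=> hu; rewrite /dmin.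
have := mem_index_enum u.
elim: (index_enum _) => // a r IH; rewrite inE big_cons => /predU1P [<-|jr].
  by rewrite hu geq_minl.
by case: ifP => _; rewrite ?(leq_trans (geq_minr _ _)) ?(IH jr).
Qed.

Lemma dmin_ge m :
  (forall u : 'rV['F_2]_k, u *m G != 0 -> (m <= wt (u *m G))%N) -> (m <= n)%N ->
  (m <= dmin G)%N.
Proof.
move=> hw hm; rewrite /dmin; elim/big_ind: _ => //.
  by move=> x y hx hy; rewrite leq_min hx hy.
Qed.

Lemma exists_cw : (1 <= k)%N -> exists u : 'rV['F_2]_k, u *m G != 0.
Proof.
move=> hk; exists (const_mx 1); rewrite codeword_inj.
apply/negP => /eqP /matrixP /(_ 0 (Ordinal hk)); rewrite !mxE; apply/eqP; exact: oner_neq0.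
Qed.

End Pf.
Lemma der0 (R : realFieldType) (p : {poly R}) : p^`().[0] = p`_1.
Proof. by rewrite horner_coef0 coef_deriv mulr1n. Qed.

Lemma coef1_pow (R : realFieldType) m : ((1 - 'X : {poly R}) ^+ m)`_1 = - (m%:R).
Proof.
rewrite -der0 deriv_exp !derivE hornerMn !hornerE subr0 expr1n mulr1 mulNrn.
by [].
Qed.

Lemma coef0_pow (R : realFieldType) m : ((1 - 'X : {poly R}) ^+ m)`_0 = 1.
Proof. by rewrite -horner_coef0 !hornerE subr0 expr1n. Qed.

Lemma IE_der (R : realFieldType) k n' (G : 'M['F_2]_(k, n'.+2)) :
  (IE R G)^`().[0] =
  ((n'.+2 - 1)%:R * (acoef G 0)%:~R - (acoef G 1)%:~R) / (n'.+2)%:R.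
Proof.
rewrite der0 /IE coefB coef1 coefZ coef_sum /=.
rewrite !big_ord_recl big1 => [|i _]; last first.
  by rewrite coefZ coefXnM /= mulr0.
rewrite !coefZ /= expr0 mul1r coef1_pow expr1 coefXM /= coef0_pow.
rewrite /bump /= subn0 mulr1 addr0 sub0r [RHS]mulrC -mulrN; congr (_ * _).
by rewrite mulrN opprD opprK mulrC.
Qed.

Theorem mainTheorem4 (R : realFieldType) (n k : nat) (G : 'M['F_2]_(k, n))
  (hn : (2 <= n)%N) (hk : (1 <= k)%N) (hrank : \rank G = k) :
  [/\ (IE R G)^`().[0] =
        ((n - 1)%:R * (acoef G 0)%:~R - (acoef G 1)%:~R) / n%:R,
      acoef G 0 = 0 <-> (2 <= dmin G)%N
    & (2 <= dmin G)%N ->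
      [/\ acoef G 1 = 2 * (Delta G)%:Z,
          (IE R G)^`().[0] = - (2%:R / n%:R) * (Delta G)%:R,
          (3 <= dmin G)%N -> acoef G 1 = 0 /\ Delta G = 0%N
        & dmin G = 2%N -> (0 < Delta G)%N]].
Proof.
case: n G hn hrank => [|[|n']] G hn hrank //.
have der := IE_der R G.
have Dn : Dsum G n'.+2 = 0%N.
  by have := D0 hrank (leq0n _) (fun u hu => wt_gt0 hu); rewrite subn0.
have en : info_fun G n'.+2 = k.
  by have := info_D G n'.+2; rewrite Dn addn0 binn muln1.
have e1D : (info_fun G n'.+1 + Dsum G n'.+1 = k * n'.+2)%N.
  rewrite info_D; congr (_ * _)%N.
  by have := bin_sub (n:=n'.+2) (m:=1) isT; rewrite subSS subn0 bin1.
have a0E : acoef G 0 = (Dsum G n'.+1)%:Z.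
  rewrite /acoef !subn0 subSS subn0 mul1n en mulnC -e1D PoszD.
  by rewrite addrAC subrr add0r.
have D1iff : acoef G 0 = 0 <-> (2 <= dmin G)%N.
  rewrite a0E; split.
    move=> /eqP; rewrite eqz_nat => /eqP hD.
    apply: dmin_ge => // u hu.
    rewrite ltn_neqAle wt_gt0 // andbT; apply/eqP => h.
    have := Dpos hrank hu (esym h).
    by rewrite subSS subn0 hD.
  move=> hd; have := D0 hrank (m:=1) isT.
  rewrite subSS subn0 => -> // u hu.
  exact: leq_trans hd (dmin_le hu).
split => //.
move=> hd.
have hD1 : Dsum G n'.+1 = 0%N by apply/eqP; rewrite -eqz_nat -a0E; apply/eqP/D1iff.
have e1 : info_fun G n'.+1 = (k * n'.+2)%N by rewrite -e1D hD1 addn0.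
have DeltaE : Delta G = Dsum G n' by rewrite /Delta subSS subSS subn0.
have e2D : (info_fun G n' + Delta G = k * 'C(n'.+2, 2))%N.
  rewrite DeltaE info_D; congr (_ * _)%N.
  by have := bin_sub (n:=n'.+2) (m:=2) isT; rewrite subSS subSS subn0.
have a1E : acoef G 1 = 2 * (Delta G)%:Z.
  rewrite /acoef subSS subn0 subSS subn0 e1.
  have -> : (n'.+1 * (k * n'.+2) = (1 + 1) * info_fun G n' + 2 * Delta G)%N.
    rewrite -mulnDr e2D mulnCA [RHS]mulnCA; congr (k * _)%N.
    by rewrite -mul_bin_diag bin1 mulnC.
  by rewrite PoszD addrAC subrr add0r PoszM.
have hall2 : forall u : 'rV['F_2]_k, u *m G != 0 -> (2 <= wt (u *m G))%N.
  by move=> u hu; exact: leq_trans hd (dmin_le hu).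
split => //.
- rewrite der a0E hD1 a1E mulr0 sub0r intrM !mulNr; congr (- _).
  rewrite mulrAC.
  by [].
- move=> h3; suff hD : Delta G = 0%N by rewrite a1E hD.
  rewrite DeltaE; have := D0 hrank (m:=2) isT.
  rewrite subSS subSS subn0 => -> // u hu.
  exact: leq_trans h3 (dmin_le hu).
- move=> h2; rewrite lt0n; apply/negP => /eqP hD.
  have hall3 : forall u : 'rV['F_2]_k, u *m G != 0 -> (3 <= wt (u *m G))%N.
    move=> u hu; rewrite ltn_neqAle hall2 // andbT; apply/eqP => h.
    have := Dpos hrank hu (esym h).
    by rewrite subSS subSS subn0 -DeltaE hD.
  have [u0 hu0] := exists_cw hrank hk.
  have : (3 <= dmin G)%N.
    apply: dmin_ge => //; exact: leq_trans (hall3 u0 hu0) (wt_le _).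
  by rewrite h2.
Qed.
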